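(* In the two-unicast setting, suppose $k_{1-2}+k_{2-1}\le\min(k_{12-1},k_{12-2})$. If $k_{1-2}\le k_{1-1}$, then every pair of nonnegative integers $(R_1,R_2)$ with $R_1\le k_{1-1}$, $R_2\le k_{2-1}$, $R_1+R_2\le k_{12-1}$ is achievable. Symmetrically, if $k_{2-1}\le k_{2-2}$, then every pair of nonnegative integers $(R_1,R_2)$ with $R_1\le k_{1-2}$, $R_2\le k_{2-2}$, $R_1+R_2\le k_{12-2}$ is achievable.
   Context: $G=(V,E)$ is a directed acyclic network with unit-capacity edges (each carrying one symbol of $GF(q)$ per use), sources $s_1,s_2$ (no incoming edges), terminals $t_1,t_2$ (no outgoing edges); $t_i$ wants the message of $s_i$. For $N_1,N_2\subseteq\{1,2\}$, $k_{N_1-N_2}$ is the min-cut from $\{s_i:i\in N_1\}$ to $\{t_j:j\in N_2\}$. A linear network code over $GF(q)$: symbols on edges leaving a non-source node are $GF(q)$-linear combinations of the node's incoming symbols; symbols on edges leaving $s_i$ are $GF(q)$-linear combinations of $s_i$'s message symbols. $(R_1,R_2)$ is achievable if for some finite field $GF(q)$ there is a linear network code such that, when $s_i$ observes $R_i$ independent symbols of $GF(q)$, $t_1$ uniquely recovers $s_1$'s message and $t_2$ uniquely recovers $s_2$'s message. *)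

(* Defs.v *)
From HB Require Import structures.
From mathcomp Require Import all_boot all_order all_algebra.
Set Implicit Arguments. Unset Strict Implicit. Unset Printing Implicit Defensive.
Import GRing.Theory.

(* A network: finite node type V, finite edge type E (parallel edges allowed),
   each edge e goes from [tl e] to [hd e]; every edge has unit capacity. *)

Definition erel_avoid (V E : finType) (tl hd : E -> V) (C : {set E}) : rel V :=
  fun x y => [exists e, [&& e \notin C, tl e == x & hd e == y]].

Definition acyclic (V E : finType) (tl hd : E -> V) : Prop :=
  forall e : E, ~~ connect (erel_avoid tl hd set0) (hd e) (tl e).

Definition is_cut (V E : finType) (tl hd : E -> V) (S T : {set V}) (C : {set E}) : bool :=
  [forall s in S, forall t in T, ~~ connect (erel_avoid tl hd C) s t].

Definition mincut (V E : finType) (tl hd : E -> V) (S T : {set V}) : nat :=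
  \big[minn/#|E|]_(C : {set E} | is_cut tl hd S T C) #|C|.

(* y : E -> F is the edge-symbol assignment induced by the linear network code
   (a1, a2, b) when s1 sends x1 and s2 sends x2:
   edges out of s_i carry a linear combination (coefficients a_i e j) of s_i's
   message symbols; any other edge e carries the linear combination, with
   coefficients b d e, of the symbols on the edges d entering tl e.
   (On a DAG this assignment exists and is unique.) *)
Definition induced_symbols (F : fieldType) (V E : finType) (tl hd : E -> V)
    (s1 s2 : V) (R1 R2 : nat)
    (a1 : E -> 'I_R1 -> F) (a2 : E -> 'I_R2 -> F) (b : E -> E -> F)
    (x1 : 'rV[F]_R1) (x2 : 'rV[F]_R2) (y : E -> F) : Prop :=
  forall e : E,
    y e = (if tl e == s1 then \sum_(j < R1) a1 e j * x1 ord0 j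
           else if tl e == s2 then \sum_(j < R2) a2 e j * x2 ord0 j
           else \sum_(d : E | hd d == tl e) b d e * y d)%R.

Definition achievable (V E : finType) (tl hd : E -> V) (s1 s2 t1 t2 : V)
    (R1 R2 : nat) : Prop :=
  exists (F : finFieldType) (a1 : E -> 'I_R1 -> F) (a2 : E -> 'I_R2 -> F)
         (b : E -> E -> F),
    (forall x1 x2 x1' x2' y y',
        induced_symbols tl hd s1 s2 a1 a2 b x1 x2 y ->
        induced_symbols tl hd s1 s2 a1 a2 b x1' x2' y' ->
        (forall d, hd d == t1 -> y d = y' d) -> x1 = x1') /\
    (forall x1 x2 x1' x2' y y',
        induced_symbols tl hd s1 s2 a1 a2 b x1 x2 y ->
        induced_symbols tl hd s1 s2 a1 a2 b x1' x2' y' ->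
        (forall d, hd d == t2 -> y d = y' d) -> x2 = x2').

(* Main.v *)
Require Import Defs.
From HB Require Import structures.
From mathcomp Require Import all_boot all_order all_algebra.
From mathcomp Require Import zify.
Set Implicit Arguments. Unset Strict Implicit. Unset Printing Implicit Defensive.
Import GRing.Theory.

Section Topo.
Variables (V E : finType) (tl hd : E -> V).
Hypothesis hacyc : acyclic tl hd.

Local Notation reach C := (connect (erel_avoid tl hd C)).

Lemma reach_mono (C C' : {set E}) u v : C \subset C' -> reach C' u v -> reach C u v.
Proof.
move=> sCC'; apply: connect_sub => x y /existsP[e /and3P[eC /eqP tx /eqP hy]].
apply: connect1; apply/existsP; exists e; rewrite tx hy !eqxx andbT andbT.
by apply: contra eC; move/subsetP: sCC'; apply.
Qed.

Lemma reach_step (C : {set E}) u d : d \notin C -> reach C u (tl d) -> reach C u (hd d).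
Proof.
move=> dC r; apply: connect_trans r _; apply: connect1; apply/existsP; exists d.
by rewrite dC !eqxx.
Qed.

Lemma reach_last (C : {set E}) u v : reach C u v -> u != v ->
  exists d, [/\ d \notin C, hd d = v & reach C u (tl d)].
Proof.
case/connectP=> p; elim/last_ind: p => [|p z _] /=; first by move=> _ ->; rewrite eqxx.
rewrite rcons_path last_rcons => /andP[pp /existsP[d /and3P[dC /eqP td /eqP hdz]]] -> _.
exists d; split=> //; rewrite td; apply/connectP; by exists p.
Qed.

Lemma reach_setT u v : reach setT u v -> u = v.
Proof.
case/connectP=> [[|z p]] //= /andP[/existsP[d]]; by rewrite inE.
Qed.

Definition anc (e : E) := [set d | connect (erel_avoid tl hd set0) (hd d) (tl e)].
Definition pos (e : E) : nat := #|anc e| * #|E| + enum_rank e.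

Lemma anc_lt d e : hd d = tl e -> #|anc d| < #|anc e|.
Proof.
move=> hde; apply: proper_card; apply/properP; split.
  apply/subsetP=> x; rewrite !inE => cx.
  rewrite -hde; apply: reach_step cx; by rewrite inE.
exists d; rewrite !inE; [by rewrite hde connect0 | exact: hacyc].
Qed.

Lemma pos_lt d e : hd d = tl e -> pos d < pos e.
Proof.
move=> h; have := anc_lt h; rewrite /pos => lt.
have r1 := ltn_ord (enum_rank d); have r2 := ltn_ord (enum_rank e).
set a := #|anc d| in lt *; set b := #|anc e| in lt *; set N := #|E| in r1 r2 *.
have : a.+1 * N <= b * N by rewrite leq_mul2r lt orbT.
lia.
Qed.

Lemma pos_inj : injective pos.
Proof.
move=> d e; rewrite /pos => h.
have : (#|anc d| * #|E| + enum_rank d) %% #|E| = (#|anc e| * #|E| + enum_rank e) %% #|E| by rewrite h.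
rewrite !modnMDl !modn_small // => /val_inj; exact: enum_rank_inj.
Qed.

Lemma pos_bound e : pos e < #|E|.+1 * #|E|.
Proof.
rewrite /pos; have := ltn_ord (enum_rank e); have : #|anc e| <= #|E| by apply: max_card.
move=> h1 h2; have : #|anc e| * #|E| <= #|E| * #|E| by rewrite leq_mul2r h1 orbT.
move: h2; set r := nat_of_ord _; set N := #|E|; set a := #|anc e|; move=> *.
rewrite mulSn; lia.
Qed.

Lemma is_cut1 u w (C : {set E}) : is_cut tl hd [set u] [set w] C = ~~ reach C u w.
Proof.
apply/forallP/idP => [/(_ u)|h s]; first by rewrite inE eqxx /= => /forallP/(_ w); rewrite inE eqxx.
apply/implyP; rewrite inE => /eqP->; apply/forallP=> t; apply/implyP; by rewrite inE => /eqP->.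
Qed.

Lemma is_cut2 u1 u2 w (C : {set E}) :
  is_cut tl hd [set u1; u2] [set w] C = ~~ reach C u1 w && ~~ reach C u2 w.
Proof.
apply/forallP/andP => [h|[h1 h2] s].
  split; [move: (h u1)|move: (h u2)]; rewrite !inE eqxx ?orbT /= => /forallP/(_ w);
  by rewrite inE eqxx.
apply/implyP; rewrite !inE => /orP[]/eqP->; apply/forallP=> t; apply/implyP;
by rewrite inE => /eqP->.
Qed.

Lemma bigmin_le (I : finType) (P : pred I) (F : I -> nat) x i0 :
  P i0 -> \big[minn/x]_(i | P i) F i <= F i0.
Proof.
move=> Pi0; rewrite unlock; have : i0 \in index_enum I by rewrite mem_index_enum.
elim: (index_enum I) => //= a l IH; rewrite inE => /orP[/eqP<-|/IH h].
  by rewrite Pi0 geq_minl.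
by case: (P a) => //; rewrite geq_min h orbT.
Qed.

Lemma bigmin_att (I : finType) (P : pred I) (F : I -> nat) x :
  \big[minn/x]_(i | P i) F i = x \/ exists2 i, P i & \big[minn/x]_(i | P i) F i = F i.
Proof.
apply: (big_rec (fun v => v = x \/ exists2 i, P i & v = F i)); first by left.
move=> i v Pi [->|[j Pj ->]]; rewrite /minn; case: ifP => _; try by left.
- by right; exists i.
- by right; exists i.
- by right; exists j.
Qed.

Lemma mincut_le (S T : {set V}) (C : {set E}) : is_cut tl hd S T C -> mincut tl hd S T <= #|C|.
Proof. exact: bigmin_le. Qed.

Lemma mincut_att (S T : {set V}) : (forall s t, s \in S -> t \in T -> s != t) ->
  exists C, is_cut tl hd S T C /\ #|C| <= mincut tl hd S T.
Proof.
move=> hST; rewrite /mincut; case: (bigmin_att (fun C => is_cut tl hd S T C) (fun C : {set E} => #|C|) #|E|) => [->|[C hC ->]]; last by exists C.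
exists setT; rewrite cardsT leqnn; split=> //; apply/forallP=> s; apply/implyP=> sS.
apply/forallP=> t; apply/implyP=> tT; apply/negP=> /reach_setT st.
by move: (hST s t sS tT); rewrite st eqxx.
Qed.

End Topo.

Section Sec_P2.
Local Open Scope ring_scope.

Section LA.
Variables (E : finType) (F : fieldType) (n : nat).
Implicit Types (A : {set E}) (J : {set 'I_n}).

Definition Mat (g : E -> 'rV[F]_n) (A : {set E}) : 'M[F]_(#|E|, n) :=
  \matrix_(i < #|E|, j < n) (if enum_val i \in A then g (enum_val i) 0 j else 0).
Definition Uni (J : {set 'I_n}) : 'M[F]_(n, n) :=
  \matrix_(i < n, j < n) ((i \in J) && (i == j))%:R.
Definition U g A J := col_mx (Mat g A) (Uni J).

Lemma rowMat g A i : row i (Mat g A) = if enum_val i \in A then g (enum_val i) else 0.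
Proof. by apply/rowP=> j; rewrite !mxE; case: ifP; rewrite ?mxE. Qed.

Lemma rowUni J i : row i (Uni J) = if i \in J then delta_mx (0:'I_1) i else 0.
Proof. by apply/rowP=> j; rewrite !mxE; case: ifP => /= _; rewrite ?mxE //= eq_sym. Qed.

Lemma Mat_sub_P g (A : {set E}) m (M : 'M_(m, n)) :
  (forall a, a \in A -> (g a <= M)%MS) -> (Mat g A <= M)%MS.
Proof.
move=> h; apply/row_subP=> i; rewrite rowMat; case: ifP => [/h //|_]; exact: sub0mx.
Qed.

Lemma Uni_sub_P (J : {set 'I_n}) m (M : 'M_(m, n)) :
  (forall j, j \in J -> (delta_mx (0:'I_1) j <= M)%MS) -> (Uni J <= M)%MS.
Proof.
move=> h; apply/row_subP=> i; rewrite rowUni; case: ifP => [/h //|_]; exact: sub0mx.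
Qed.

Lemma Mat_sub_f g (A : {set E}) a : a \in A -> (g a <= Mat g A)%MS.
Proof.
move=> aA; have := row_sub (enum_rank a) (Mat g A); by rewrite rowMat enum_rankK aA.
Qed.

Lemma Uni_sub_d (J : {set 'I_n}) j : j \in J -> (delta_mx (0:'I_1) j <= Uni J)%MS.
Proof. move=> jJ; have := row_sub j (Uni J); by rewrite rowUni jJ. Qed.

Lemma U_sub_f g (A : {set E}) J a : a \in A -> (g a <= U g A J)%MS.
Proof.
move=> aA; apply: submx_trans (Mat_sub_f g aA) _; rewrite -addsmxE; exact: addsmxSl.
Qed.

Lemma U_sub_d g A (J : {set 'I_n}) j : j \in J -> (delta_mx (0:'I_1) j <= U g A J)%MS.
Proof.
move=> jJ; apply: submx_trans (Uni_sub_d jJ) _; rewrite -addsmxE; exact: addsmxSr.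
Qed.

Lemma U_sub_P g (A : {set E}) J m (M : 'M_(m, n)) :
  (forall a, a \in A -> (g a <= M)%MS) -> (forall j, j \in J -> (delta_mx (0:'I_1) j <= M)%MS) ->
  (U g A J <= M)%MS.
Proof. by move=> h1 h2; rewrite col_mx_sub Mat_sub_P ?Uni_sub_P. Qed.

Lemma U_mono g A A' J J' : A \subset A' -> J \subset J' -> (U g A J <= U g A' J')%MS.
Proof.
move=> sA sJ; apply: U_sub_P => [a aA|j jJ].
  by apply: U_sub_f; move/subsetP: sA; apply.
by apply: U_sub_d; move/subsetP: sJ; apply.
Qed.

Lemma Mat_eq g g' A : {in A, g =1 g'} -> Mat g A = Mat g' A.
Proof. by move=> h; apply/matrixP=> i j; rewrite !mxE; case: ifP => // /h->. Qed.

Lemma U_eq g g' A J : {in A, g =1 g'} -> U g A J = U g' A J.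
Proof. by move=> h; rewrite /U (Mat_eq h). Qed.

Lemma Mat_rank g A : (\rank (Mat g A) <= #|A|)%N.
Proof.
elim: {A}_.+1 {-2}A (ltnSn #|A|) => // N IH A.
case: (set_0Vmem A) => [->|[a aA]] hN.
  rewrite cards0 leqn0 mxrank_eq0; apply/eqP/matrixP=> i j; by rewrite !mxE inE.
set A0 := A :\ a; have cA : #|A| = #|A0|.+1 by rewrite (cardsD1 a A) aA.
have h0 : (Mat g A <= Mat g A0 + g a)%MS.
  apply: Mat_sub_P => x xA; case: (eqVneq x a) => [->|xa]; first exact: addsmxSr.
  apply: submx_trans (addsmxSl _ _); apply: Mat_sub_f; by rewrite !inE xa.
apply: leq_trans (mxrankS h0) _; apply: leq_trans (leq_of_leqif (mxrank_adds_leqif _ _)) _.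
rewrite cA -[X in (_ <= X)%N]addn1 leq_add ?rank_leq_row // IH //; by rewrite -ltnS -cA.
Qed.

Lemma Uni_rank J : (#|J| <= \rank (Uni J))%N.
Proof.
elim: {J}_.+1 {-2}J (ltnSn #|J|) => // N IH J.
case: (set_0Vmem J) => [->|[j jJ]] hN; first by rewrite cards0.
set J0 := J :\ j; have cJ : #|J| = #|J0|.+1 by rewrite (cardsD1 j J) jJ.
rewrite cJ; apply: leq_ltn_trans (IH J0 _) _; first by rewrite -ltnS -cJ.
apply: rank_ltmx; rewrite ltmxE; apply/andP; split.
  by apply: Uni_sub_P => i; rewrite inE => /andP[_ ?]; apply: Uni_sub_d.
apply: contraT; rewrite negbK => h; have := submx_trans (Uni_sub_d jJ) h.
case/submxP=> D /matrixP/(_ 0 j); rewrite !mxE !eqxx /= => hh.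
have hs : \sum_(k < n) D 0 k * Uni J0 k j = 0.
  apply: big1 => k _; rewrite !mxE.
  case: (eqVneq k j) => [->|kj]; first by rewrite !inE eqxx mulr0.
  by rewrite andbF mulr0.
by move: hh; rewrite hs => /eqP; rewrite oner_eq0.
Qed.

End LA.

End Sec_P2.

Section Sec_P3.
Local Open Scope ring_scope.

Lemma fresh_elt (T : finType) (s : seq T) : (size s < #|T|)%N -> exists x, x \notin s.
Proof.
move=> h; apply/existsP; apply: contraTT h; rewrite negb_exists => /forallP hs.
rewrite -leqNgt; apply: leq_trans (card_size s); apply: subset_leq_card.
by apply/subsetP=> x _; move: (hs x); rewrite negbK.
Qed.

Lemma avoid_seq (F : finFieldType) m k n (G : 'M[F]_(m, n)) (I : eqType)
  (Us : I -> 'M[F]_(k, n)) (s : seq I) : (size s < #|F|)%N ->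
  exists c : 'rV_m, forall i, i \in s -> ~~ (G <= Us i)%MS -> ~~ (c *m G <= Us i)%MS.
Proof.
elim: s => [|i s IH] /= hs; first by exists 0.
have [c hc] := IH (ltnW hs).
case hGi: (G <= Us i)%MS.
  by exists c => i'; rewrite inE => /orP[/eqP->|/hc//]; rewrite hGi.
case hci: (c *m G <= Us i)%MS; last first.
  by exists c => i'; rewrite inE => /orP[/eqP->|/hc//]; rewrite hci.
have [r hr] : exists r, ~~ (row r G <= Us i)%MS.
  by apply/existsP; apply: contraFT hGi; rewrite negb_exists => /forallP h;
     apply/row_subP=> r; move: (h r); rewrite negbK.
set w := row r G.
pose bad (i' : I) := [pick l : F | ((c + l *: delta_mx 0 r) *m G <= Us i')%MS].
pose L := 0 :: pmap bad s.
have [l hl] : exists l, l \notin L.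
  apply: fresh_elt; apply: leq_ltn_trans hs; rewrite /= ltnS size_pmap; exact: count_size.
have l0 : l != 0 by move: hl; rewrite inE negb_or => /andP[].
have hwl : forall M : 'M[F]_(k,n), ((c + l *: delta_mx 0 r) *m G <= M)%MS ->
   (c *m G <= M)%MS -> (w <= M)%MS.
  move=> M h1 h2.
  have : (l *: w <= M)%MS.
    have -> : l *: w = (c + l *: delta_mx 0 r) *m G - c *m G.
      by rewrite mulmxDl -scalemxAl -rowE addrC addKr.
    by rewrite addmx_sub // eqmx_opp.
  by move/(scalemx_sub (l^-1)); rewrite scalerA mulVf // scale1r.
exists (c + l *: delta_mx 0 r) => i'; rewrite inE => /orP[/eqP->|i's] hG.
  by apply/negP=> h; move: (hwl _ h hci); rewrite (negbTE hr).
apply/negP=> h.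
have hci' := hc i' i's hG.
case hb: (bad i') => [l'|]; last first.
  by move: hb; rewrite /bad; case: pickP => // /(_ l); rewrite h.
have hl' : ((c + l' *: delta_mx 0 r) *m G <= Us i')%MS.
  by move: hb; rewrite /bad; case: pickP => // x hx [<-].
have ll' : l != l'.
  apply: contraNneq hl => ->; rewrite inE; apply/orP; right.
  by rewrite mem_pmap; apply/mapP; exists i'.
have : ((l - l') *: w <= Us i')%MS.
  have -> : (l - l') *: w = (c + l *: delta_mx 0 r) *m G - (c + l' *: delta_mx 0 r) *m G.
    rewrite !mulmxDl -!scalemxAl -rowE -/w scalerBl; rewrite opprD addrACA subrr add0r //.
  by rewrite addmx_sub // eqmx_opp.
move/(scalemx_sub ((l - l')^-1)); rewrite scalerA mulVf ?subr_eq0 // scale1r => hw.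
apply: (negP hci').
have -> : c *m G = (c + l *: delta_mx 0 r) *m G - l *: w.
  by rewrite mulmxDl -scalemxAl -rowE addrK.
by rewrite addmx_sub // eqmx_opp scalemx_sub.
Qed.

Lemma avoid (F : finFieldType) m k n (G : 'M[F]_(m, n)) (I : finType)
  (Us : I -> 'M[F]_(k, n)) : (#|I| < #|F|)%N ->
  exists c : 'rV_m, forall i, ~~ (G <= Us i)%MS -> ~~ (c *m G <= Us i)%MS.
Proof.
move=> h; have [|c hc] := @avoid_seq F m k n G I Us (enum I); first by rewrite -cardE.
by exists c => i; apply: hc; rewrite mem_enum.
Qed.

End Sec_P3.

Section Sec_P4.
Local Open Scope ring_scope.

Lemma dcoord (F : fieldType) m k (x : 'rV[F]_m) :
  (delta_mx (0:'I_1) k *m x^T) 0 0 = x 0 k.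
Proof. by rewrite -rowE mxE mxE. Qed.

Section Net.
Variables (V E : finType) (tl hd : E -> V) (s1 s2 : V).
Hypothesis hacyc : acyclic tl hd.
Hypothesis hs12 : s1 != s2.
Hypothesis hsrc : forall e : E, hd e != s1 /\ hd e != s2.
Variables (F : finFieldType) (R1 R2 : nat).
Local Notation n := (R1 + R2).
Local Notation pos := (pos tl hd).
Local Notation reach C := (connect (erel_avoid tl hd C)).
Implicit Types (A : {set E}) (J : {set 'I_n}) (g : E -> 'rV[F]_n).

Definition Inn v := [set d | hd d == v].
Definition part1 := [set k : 'I_n | (k < R1)%N].
Definition part2 := [set k : 'I_n | (R1 <= k)%N].
Definition Part v := if v == s1 then part1 else if v == s2 then part2 else set0.
Definition Gen g e := U g (Inn (tl e)) (Part (tl e)).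
Definition GEN g e := forall A J, (forall a, a \in A -> (pos a < pos e)%N) ->
  ~~ (Gen g e <= U g A J)%MS -> ~~ (g e <= U g A J)%MS.

Lemma Gen_eq g g' e : (forall d, (pos d < pos e)%N -> g d = g' d) -> Gen g e = Gen g' e.
Proof.
move=> h; apply: U_eq => d; rewrite inE => /eqP hde; apply: h; exact: pos_lt.
Qed.

Lemma construct : (#|{: {set E} * {set 'I_n}}| < #|F|)%N ->
  exists (ce : E -> 'rV[F]_(#|E| + n)) (f : E -> 'rV[F]_n),
    forall e, f e = ce e *m Gen f e /\ GEN f e.
Proof.
move=> hF.
suff : forall p, exists (ce : E -> 'rV[F]_(#|E| + n)) (f : E -> 'rV[F]_n),
    forall e, (pos e < p)%N -> f e = ce e *m Gen f e /\ GEN f e.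
  case/(_ (#|E|.+1 * #|E|)) => ce [f h]; exists ce, f => e; apply: h; exact: pos_bound.
elim=> [|p [ce [f IH]]]; first by exists (fun _ => 0), (fun _ => 0).
case: (pickP (fun e => pos e == p)) => [e /eqP pe|none]; last first.
  exists ce, f => x; rewrite ltnS leq_eqVlt => /orP[/eqP px|]; last exact: IH.
  by move: (none x); rewrite px eqxx.
have [c hc] := avoid (Gen f e) (fun ij : {set E} * {set 'I_n} => U f ij.1 ij.2) hF.
pose f' x := if x == e then c *m Gen f e else f x.
pose ce' x := if x == e then c else ce x.
have agree : forall x, (pos x < p)%N -> f' x = f x.
  by move=> x hx; rewrite /f'; case: eqP => // xe; move: hx; rewrite xe pe ltnn.
exists ce', f' => x; rewrite ltnS leq_eqVlt => /orP[/eqP px|hx].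
  have xe : x = e by apply: (@pos_inj _ _ tl hd); rewrite px pe.
  subst x; have hG : Gen f' e = Gen f e by apply: Gen_eq => d; rewrite pe; exact: agree.
  split; first by rewrite hG /f' /ce' eqxx.
  move=> A J hA; rewrite hG !(U_eq (g:=f') (g':=f)); last first.
    by move=> a /hA; rewrite pe; exact: agree.
  rewrite /f' eqxx; exact: (hc (A, J)).
have hG : Gen f' x = Gen f x.
  by apply: Gen_eq => d hdx; apply: agree; exact: ltn_trans hdx hx.
have [h1 h2] := IH x hx.
split; first by rewrite hG agree // h1 /ce'; case: eqP => // xe; move: hx; rewrite xe pe ltnn.
move=> A J hA; rewrite hG (agree x hx) !(U_eq (g:=f') (g':=f)); first exact: h2.
by move=> a /hA ha; apply: agree; exact: ltn_trans hx.
Qed.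

Section Lower.
Variables (ce : E -> 'rV[F]_(#|E| + n)) (f : E -> 'rV[F]_n).
Hypothesis hgen : forall e, f e = ce e *m Gen f e /\ GEN f e.

Definition valid A J J' (C : {set E}) : Prop := J \subset J' /\
  forall a, a \in A -> a \notin C ->
   (reach C s1 (tl a) -> part1 \subset J') /\ (reach C s2 (tl a) -> part2 \subset J').

Lemma Part_s1 : Part s1 = part1. Proof. by rewrite /Part eqxx. Qed.
Lemma Part_s2 : Part s2 = part2. Proof. by rewrite /Part eq_sym (negbTE hs12) eqxx. Qed.

Lemma lower A J : exists J' C, valid A J J' C /\ (#|J'| + #|C| <= \rank (U f A J))%N.
Proof.
suff Q : forall p A J, (forall a, a \in A -> (pos a < p)%N) ->
   exists J' C, valid A J J' C /\ (#|J'| + #|C| <= \rank (U f A J))%N.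
  apply: (Q (#|E|.+1 * #|E|)) => a _; exact: pos_bound.
elim=> [|p IH] {}A {}J hA.
  have A0 : A = set0 by apply/setP=> a; rewrite inE; apply/negP=> /hA.
  exists J, set0; split; first by split=> // a; rewrite A0 inE.
  rewrite cards0 addn0; apply: leq_trans (Uni_rank F J) (mxrankS _).
  rewrite -addsmxE; exact: addsmxSr.
case: (pickP (fun e => (e \in A) && (pos e == p))) => [e /andP[eA /eqP pe]|none]; last first.
  apply: IH => a aA; have := hA a aA; rewrite ltnS leq_eqVlt => /orP[/eqP pa|//].
  by move: (none a); rewrite aA pa eqxx.
set A' := A :\ e.
have hA' : forall a, a \in A' -> (pos a < p)%N.
  move=> a; rewrite !inE => /andP[ae aA]; have := hA a aA; rewrite ltnS leq_eqVlt.
  case/orP=> [/eqP pa|//]; case/eqP: ae; apply: (@pos_inj _ _ tl hd); by rewrite pa pe.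
have sA' : A' \subset A by apply: subsetDl.
set v := tl e.
case hW: (Gen f e <= U f A' J)%MS.
  set A'' := A' :|: Inn v; set J'' := J :|: Part v.
  have [|J' [C [[vJ1 vJ2] hc]]] := IH A'' J''.
    move=> a; rewrite inE => /orP[/hA'//|]; rewrite inE => /eqP hav.
    rewrite -pe; exact: pos_lt.
  exists J', C; split; last first.
    apply: leq_trans hc (mxrankS _); apply: U_sub_P => [a|j].
      rewrite inE => /orP[aA'|aI]; first by apply: U_sub_f; move/subsetP: sA'; apply.
      apply: submx_trans (U_mono f (A:=A') (J:=J) sA' (subxx _)).
      apply: submx_trans hW; exact: U_sub_f.
    rewrite inE => /orP[jJ|jP]; first exact: U_sub_d.
    apply: submx_trans (U_mono f (A:=A') (J:=J) sA' (subxx _)).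
    apply: submx_trans hW; exact: U_sub_d.
  have sJ : J'' \subset J' by [].
  split; first by apply: subset_trans sJ; apply: subsetUl.
  move=> a aA aC; case: (eqVneq a e) => [->|ae]; last first.
    by apply: vJ2 => //; rewrite !inE ae aA.
  have hPJ : Part v \subset J' by apply: subset_trans sJ; apply: subsetUr.
  split=> hr.
    case: (eqVneq s1 v) => [hv|hv]; first by rewrite -Part_s1 hv.
    have [d [dC hdv rd]] := reach_last hr hv.
    by apply: (proj1 (vJ2 d _ dC)) => //; rewrite !inE hdv eqxx orbT.
  case: (eqVneq s2 v) => [hv|hv]; first by rewrite -Part_s2 hv.
  have [d [dC hdv rd]] := reach_last hr hv.
  by apply: (proj2 (vJ2 d _ dC)) => //; rewrite !inE hdv eqxx orbT.
have hfe : ~~ (f e <= U f A' J)%MS.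
  apply: (proj2 (hgen e)); last by rewrite hW.
  by move=> a /hA'; rewrite pe.
have [J' [C [[vJ1 vJ2] hc]]] := IH A' J hA'.
exists J', (e |: C); split.
  split=> // a aA; rewrite !inE negb_or => /andP[ae aC].
  have [] := vJ2 a _ aC; first by rewrite !inE ae.
  move=> h1 h2; split=> hr; [apply: h1|apply: h2]; apply: reach_mono hr; exact: subsetUr.
rewrite cardsU1; apply: leq_trans (_ : #|J'| + #|C| + 1 <= _)%N; first by lia.
rewrite addn1; apply: leq_ltn_trans hc _; apply: rank_ltmx; rewrite ltmxE.
rewrite U_mono ?subxx //=; apply: contra hfe; apply: submx_trans; exact: U_sub_f.
Qed.


Definition a1c e (j : 'I_R1) := ce e 0 (rshift #|E| (lshift R2 j)).
Definition a2c e (j : 'I_R2) := ce e 0 (rshift #|E| (rshift R1 j)).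
Definition bc d e := ce e 0 (lshift n (enum_rank d)).

Lemma MatX g A (X : 'M[F]_(n, 1)) i :
  (Mat g A *m X) i 0 = if enum_val i \in A then (g (enum_val i) *m X) 0 0 else 0.
Proof.
have -> : (Mat g A *m X) i 0 = (row i (Mat g A *m X)) 0 0 by rewrite [RHS]mxE.
by rewrite row_mul rowMat; case: ifP => _ //; rewrite mul0mx mxE.
Qed.

Lemma UniX J (X : 'M[F]_(n, 1)) j :
  (Uni F J *m X) j 0 = if j \in J then X j 0 else 0.
Proof.
have -> : (Uni F J *m X) j 0 = (row j (Uni F J *m X)) 0 0 by rewrite [RHS]mxE.
rewrite row_mul rowUni; case: ifP => _; [by rewrite -rowE mxE | by rewrite mul0mx mxE].
Qed.

Lemma sem x1 x2 y : induced_symbols tl hd s1 s2 a1c a2c bc x1 x2 y ->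
  forall e, y e = (f e *m (row_mx x1 x2)^T) 0 0.
Proof.
move=> hy; set X := (row_mx x1 x2)^T.
suff : forall p e, (pos e < p)%N -> y e = (f e *m X) 0 0.
  move=> h e; exact: (h (pos e).+1).
elim=> [//|p IH] e hep; rewrite hy (proj1 (hgen e)) -mulmxA mxE /Gen /U mul_col_mx big_split_ord /=.
rewrite [X in X + _](eq_bigr (fun i => ce e 0 (lshift n i) *
   (if enum_val i \in Inn (tl e) then y (enum_val i) else 0))); last first.
  move=> i _; rewrite col_mxEu MatX; case: ifP => //; rewrite inE => /eqP hi.
  rewrite -IH //; apply: leq_trans (pos_lt hacyc hi) _; by rewrite -ltnS.
rewrite [X in _ + X](eq_bigr (fun j => ce e 0 (rshift #|E| j) *
   (if j \in Part (tl e) then X j 0 else 0))); last by move=> j _; rewrite col_mxEd UniX.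
have XE1 : forall i, X (lshift R2 i) 0 = x1 0 i by move=> i; rewrite mxE row_mxEl.
have XE2 : forall i, X (rshift R1 i) 0 = x2 0 i by move=> i; rewrite mxE row_mxEr.
case: ifP => [/eqP h1|h1].
  rewrite /Part h1 eqxx [X in X + _]big1 ?add0r; last first.
    by move=> i _; rewrite /Inn inE (negbTE (hsrc _).1) mulr0.
  rewrite big_split_ord /= [X in _ + X]big1 ?addr0; last first.
    by move=> j _; rewrite inE /= ltnNge leq_addr mulr0.
  by apply: eq_bigr => i _; rewrite inE /= ltn_ord XE1.
case: ifP => [/eqP h2|h2].
  rewrite /Part h1 h2 eqxx [X in X + _]big1 ?add0r; last first.
    by move=> i _; rewrite /Inn inE (negbTE (hsrc _).2) mulr0.
  rewrite big_split_ord /= [X in X + _]big1 ?add0r; last first.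
    by move=> j _; rewrite inE /= leqNgt ltn_ord mulr0.
  by apply: eq_bigr => i _; rewrite inE /= leq_addr XE2.
rewrite /Part h1 h2 [X in _ + X]big1 ?addr0; last by move=> j _; rewrite inE mulr0.
rewrite big_mkcond /= (reindex (@enum_val E (mem E))) /=; last first.
  by exists enum_rank => i _; rewrite ?enum_valK ?enum_rankK.
apply: eq_bigr => i _; rewrite /Inn inE /bc enum_valK; case: ifP => _ //; by rewrite mulr0.
Qed.

Lemma decode t u x1 x2 y x1' x2' y' :
  induced_symbols tl hd s1 s2 a1c a2c bc x1 x2 y ->
  induced_symbols tl hd s1 s2 a1c a2c bc x1' x2' y' ->
  (forall d, hd d == t -> y d = y' d) -> (u <= Mat f (Inn t))%MS ->
  (u *m (row_mx x1 x2)^T = u *m (row_mx x1' x2')^T :> 'M_(1, 1)).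
Proof.
move=> h h' hyy /submxP[D ->]; rewrite -!mulmxA; congr (D *m _).
apply/matrixP => i j; rewrite (ord1 j) !MatX; case: ifP => // hi.
rewrite -(sem h) -(sem h'); apply: hyy; by rewrite /Inn inE in hi.
Qed.

Lemma delta_coord k (x : 'rV[F]_n) :
  (delta_mx (0:'I_1) k *m x^T) 0 0 = x 0 k.
Proof. by rewrite -rowE mxE mxE. Qed.

Definition P1 : 'M[F]_(n, R1) := col_mx 1%:M 0.
Definition fP x := f x *m P1.

Lemma proj_good (C : {set E}) d : (d \in C) || ~~ reach C s1 (tl d) ->
  (f d *m P1 <= Mat fP C)%MS.
Proof.
suff : forall p d, (pos d < p)%N -> (d \in C) || ~~ reach C s1 (tl d) ->
  (f d *m P1 <= Mat fP C)%MS by move=> h; exact: (h (pos d).+1).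
elim=> [//|p IH] {}d hdp /orP[dC|nr]; first exact: (Mat_sub_f fP dC).
rewrite (proj1 (hgen d)) -mulmxA; apply: submx_trans (submxMl _ _) _.
rewrite /Gen /U mul_col_mx col_mx_sub; apply/andP; split.
  apply/row_subP => i; rewrite row_mul rowMat; case: ifP => [hi|_]; last by rewrite mul0mx sub0mx.
  rewrite /Inn inE in hi; apply: IH.
    apply: leq_trans (pos_lt hacyc (eqP hi)) _; by rewrite -ltnS.
  apply/orP; have [nC|nC] := boolP (enum_val i \in C); [by left|right]; apply: contra nr => r.
  by move/eqP: hi => <-; exact: reach_step nC r.
apply/row_subP => j; rewrite row_mul rowUni; case: ifP => [hj|_]; last by rewrite mul0mx sub0mx.
have ns1 : tl d != s1 by apply: contra nr => /eqP->; exact: connect0.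
move: hj; rewrite /Part (negbTE ns1); case: ifP => _; last by rewrite inE.
rewrite inE => hj; case: (splitP j) => [j1 hj1|j2 hj2].
  by move: hj; rewrite hj1 leqNgt ltn_ord.
have -> : j = rshift R1 j2 by apply: val_inj.
by rewrite -rowE /P1 rowKd row0 sub0mx.
Qed.

Lemma proj_rank (C : {set E}) t : ~~ reach C s1 t ->
  (\rank (Mat f (Inn t) *m P1) <= #|C|)%N.
Proof.
move=> nr; apply: leq_trans (mxrankS _) (Mat_rank fP C).
apply/row_subP => i; rewrite row_mul rowMat; case: ifP => [hi|_]; last by rewrite mul0mx sub0mx.
apply: proj_good; apply/orP; have [nC|nC] := boolP (enum_val i \in C); [by left|right].
apply: contra nr => r; rewrite /Inn inE in hi; by move/eqP: hi => <-; exact: reach_step nC r.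
Qed.

End Lower.

Lemma card_part1 : #|part1| = R1.
Proof.
have h0 : (\sum_(j < R2 | rshift R1 j \in part1) 1 = 0)%N.
  by apply: big_pred0 => j; rewrite inE /= ltnNge leq_addr.
rewrite -sum1_card big_split_ord /= h0.
rewrite (eq_bigl xpredT) => [|i]; last by rewrite inE /= ltn_ord.
by rewrite sum1_card card_ord addn0.
Qed.

Lemma card_part2 : #|part2| = R2.
Proof.
have h0 : (\sum_(j < R1 | lshift R2 j \in part2) 1 = 0)%N.
  by apply: big_pred0 => j; rewrite inE /= leqNgt ltn_ord.
rewrite -sum1_card big_split_ord /= h0 add0n.
rewrite (eq_bigl xpredT) => [|i]; last by rewrite inE /= leq_addr.
by rewrite sum1_card card_ord.
Qed.

Lemma card_parts (J : {set 'I_n}) : part1 \subset J -> part2 \subset J -> (n <= #|J|)%N.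
Proof.
move=> h1 h2; apply: leq_trans (_ : #|[set: 'I_n]| <= _)%N; first by rewrite cardsT card_ord.
apply: subset_leq_card; apply/subsetP=> k _; case: (ltnP k R1) => hk.
  by move/subsetP: h1; apply; rewrite inE.
by move/subsetP: h2; apply; rewrite inE.
Qed.

Lemma cut_of (C : {set E}) (J' : {set 'I_n}) t :
  (forall a, a \in Inn t -> a \notin C ->
   (reach C s1 (tl a) -> part1 \subset J') /\ (reach C s2 (tl a) -> part2 \subset J')) ->
  s1 != t -> s2 != t ->
  (~~ (part1 \subset J') -> ~~ reach C s1 t) /\ (~~ (part2 \subset J') -> ~~ reach C s2 t).
Proof.
move=> vJ h1 h2; split=> np; apply: contra np => r.
  have [d [dC hdt rd]] := reach_last r h1.
  by apply: (proj1 (vJ d _ dC)) => //; rewrite /Inn inE hdt.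
have [d [dC hdt rd]] := reach_last r h2.
by apply: (proj2 (vJ d _ dC)) => //; rewrite /Inn inE hdt.
Qed.

Lemma achieve_F (t1 t2 : V) :
  [&& s1 != t1, s1 != t2, s2 != t1 & s2 != t2] ->
  (#|{: {set E} * {set 'I_n}}| < #|F|)%N ->
  let k := fun (S T : {set V}) => mincut tl hd S T in
  (k [set s1] [set t2] + k [set s2] [set t1] <= k [set s1; s2] [set t2])%N ->
  (R1 <= k [set s1] [set t1])%N -> (R2 <= k [set s2] [set t1])%N ->
  (R1 + R2 <= k [set s1; s2] [set t1])%N ->
  exists (a1 : E -> 'I_R1 -> F) (a2 : E -> 'I_R2 -> F) (b : E -> E -> F),
    (forall x1 x2 x1' x2' y y',
        induced_symbols tl hd s1 s2 a1 a2 b x1 x2 y ->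
        induced_symbols tl hd s1 s2 a1 a2 b x1' x2' y' ->
        (forall d, hd d == t1 -> y d = y' d) -> x1 = x1') /\
    (forall x1 x2 x1' x2' y y',
        induced_symbols tl hd s1 s2 a1 a2 b x1 x2 y ->
        induced_symbols tl hd s1 s2 a1 a2 b x1' x2' y' ->
        (forall d, hd d == t2 -> y d = y' d) -> x2 = x2').
Proof.
case/and4P=> h11 h12 h21 h22 hF; cbv beta zeta; move=> hk hR1 hR2 hR12.
have [ce [f hgen]] := construct hF.
exists (a1c ce), (a2c ce), (bc ce); split.
-
  have [J' [C [[_ vJ] hc]]] := lower hgen (Inn t1) set0.
  have [c1 c2] := cut_of vJ h11 h21.
  have hUM : forall A, (U f A set0 <= Mat f A)%MS.
    by move=> A; rewrite col_mx_sub submx_refl; apply: Uni_sub_P => j; rewrite inE.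
  have hfull : row_full (Mat f (Inn t1)).
    rewrite /row_full eqn_leq rank_leq_col /=; apply: leq_trans (mxrankS (hUM _)).
    apply: leq_trans hc.
    case: (boolP (part1 \subset J')) => p1; case: (boolP (part2 \subset J')) => p2.
    + by apply: leq_trans (card_parts p1 p2) (leq_addr _ _).
    + apply: leq_add; first by have := subset_leq_card p1; rewrite card_part1.
      by apply: leq_trans hR2 _; apply: mincut_le; rewrite is_cut1 c2.
    + apply: (@leq_trans (R2 + R1)); first by rewrite addnC.
      apply: leq_add; first by have := subset_leq_card p2; rewrite card_part2.
      by apply: leq_trans hR1 _; apply: mincut_le; rewrite is_cut1 c1.
    + apply: leq_trans hR12 (leq_trans _ (leq_addl _ _)).
      by apply: mincut_le; rewrite is_cut2 c1 // c2.
  move=> x1 x2 x1' x2' y y' hy hy' hyy; apply/rowP=> j.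
  have := decode hgen hy hy' hyy (submx_full (delta_mx (0:'I_1) (lshift R2 j)) hfull).
  by move/matrixP/(_ 0 0); rewrite !dcoord !row_mxEl.
-
  have [J' [C [[_ vJ] hc]]] := lower hgen (Inn t2) set0.
  have [c1 c2] := cut_of vJ h12 h22.
  set S := Mat f (Inn t2).
  have hUS : (\rank (U f (Inn t2) set0) <= \rank S)%N.
    apply: mxrankS; by rewrite col_mx_sub submx_refl; apply: Uni_sub_P => j; rewrite inE.
  have neq : forall s, s != t2 -> forall a b, a \in [set s] -> b \in [set t2] -> a != b.
    by move=> s hs a b; rewrite !inE => /eqP-> /eqP->.
  have [C1 [cC1 hC1]] := mincut_att tl hd (neq _ h12).
  have [C2 [cC2 hC2]] := mincut_att tl hd (neq _ h22).
  rewrite is_cut1 in cC1; rewrite is_cut1 in cC2.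
  have k2122 : (mincut tl hd [set s2] [set t1] <= mincut tl hd [set s2] [set t2])%N.
    have h : (mincut tl hd [set s1; s2] [set t2] <= #|C1 :|: C2|)%N.
      apply: mincut_le; rewrite is_cut2; apply/andP; split.
        by apply: contra cC1; apply: reach_mono; apply: subsetUl.
      by apply: contra cC2; apply: reach_mono; apply: subsetUr.
    have := leq_trans hk (leq_trans h (leq_trans (leq_card_setU _ _) (leq_add hC1 hC2))).
    by rewrite leq_add2l.
  have hr1a : (\rank (S *m P1) <= R1)%N by apply: rank_leq_col.
  have hr1b : (\rank (S *m P1) <= mincut tl hd [set s1] [set t2])%N.
    exact: leq_trans (proj_rank hgen cC1) hC1.
  have hS : (\rank (S *m P1) + R2 <= \rank S)%N.
    apply: leq_trans _ (leq_trans hc hUS).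
    case: (boolP (part1 \subset J')) => p1; case: (boolP (part2 \subset J')) => p2.
    + apply: leq_trans (leq_addr _ _); apply: leq_trans (card_parts p1 p2).
      by rewrite leq_add2r.
    + apply: leq_add; first by have := subset_leq_card p1; rewrite card_part1 => h; apply: leq_trans h.
      apply: leq_trans hR2 (leq_trans k2122 _); apply: mincut_le; by rewrite is_cut1 c2.
    + rewrite addnC; apply: leq_add; first by have := subset_leq_card p2; rewrite card_part2.
      apply: leq_trans hr1b _; apply: mincut_le; by rewrite is_cut1 c1.
    + apply: leq_trans (leq_addl _ _); apply: leq_trans (leq_add hr1b hR2) _.
      apply: leq_trans hk _; apply: mincut_le; by rewrite is_cut2 c1 // c2.
  have hrk := mxrank_mul_ker S P1.
  rewrite -hrk leq_add2l in hS.
  pose Z2 := row_mx (0 : 'M[F]_(R2, R1)) (1%:M : 'M[F]_R2).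
  have hK : (kermx P1 <= Z2)%MS.
    apply/row_subP => i; have hi : row i (kermx P1) *m P1 = 0.
      by apply/sub_kermxP; exact: row_sub.
    move: hi; set r := row i (kermx P1); rewrite -(hsubmxK r) /P1 mul_row_col mulmx1 mulmx0 addr0.
    move=> ->; have -> : row_mx 0 (rsubmx r) = rsubmx r *m Z2 by rewrite mul_mx_row mulmx0 mulmx1.
    exact: submxMl.
  have hSK : (S :&: kermx P1 <= Z2)%MS := submx_trans (capmxSr _ _) hK.
  have hZ : (Z2 <= S)%MS.
    case: (mxrank_leqif_sup hSK) => h1 h2.
    have : (\rank (S :&: kermx P1) == \rank Z2).
      by rewrite eqn_leq h1 /= (leq_trans (rank_leq_row Z2) hS).
    by rewrite h2 => /submx_trans; apply; exact: capmxSl.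
  move=> x1 x2 x1' x2' y y' hy hy' hyy; apply/rowP=> j.
  have := decode hgen hy hy' hyy (submx_trans (row_sub j Z2) hZ).
  have zc : forall (a : 'rV[F]_R1) (b : 'rV[F]_R2), (row j Z2 *m (row_mx a b)^T) 0 0 = b 0 j.
    move=> a b; rewrite rowE mul_mx_row mulmx0 mulmx1 tr_row_mx mul_row_col mul0mx add0r.
    exact: dcoord.
  by move/matrixP/(_ 0 0); rewrite !zc.
Qed.
End Net.

End Sec_P4.

Lemma induced_swap (F : fieldType) (V E : finType) (tl hd : E -> V) (s1 s2 : V)
  R1 R2 a1 a2 b (x1 : 'rV[F]_R1) (x2 : 'rV[F]_R2) y : s1 != s2 ->
  induced_symbols tl hd s2 s1 a2 a1 b x2 x1 y <-> induced_symbols tl hd s1 s2 a1 a2 b x1 x2 y.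
Proof.
move=> hs; split=> h e; rewrite h; case: (eqVneq (tl e) s1) => [->|h1];
  rewrite ?eqxx ?(negbTE hs) ?(negbTE (negbT _)) //; by case: (eqVneq (tl e) s2) => [->|]; rewrite ?eq_sym ?(negbTE hs).
Qed.

Unset Implicit Arguments.

Theorem mainTheorem8 (V E : finType) (tl hd : E -> V) (s1 s2 t1 t2 : V)
  (hacyc : acyclic tl hd)
  (hs12 : s1 != s2) (ht12 : t1 != t2)
  (hst : [&& s1 != t1, s1 != t2, s2 != t1 & s2 != t2])
  (hsrc : forall e : E, hd e != s1 /\ hd e != s2)
  (hterm : forall e : E, tl e != t1 /\ tl e != t2) :
  let k := fun (S T : {set V}) => mincut tl hd S T in
  k [set s1] [set t2] + k [set s2] [set t1]
    <= minn (k [set s1; s2] [set t1]) (k [set s1; s2] [set t2]) ->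
  (k [set s1] [set t2] <= k [set s1] [set t1] ->
     forall R1 R2 : nat,
       R1 <= k [set s1] [set t1] -> R2 <= k [set s2] [set t1] ->
       R1 + R2 <= k [set s1; s2] [set t1] ->
       achievable tl hd s1 s2 t1 t2 R1 R2) /\
  (k [set s2] [set t1] <= k [set s2] [set t2] ->
     forall R1 R2 : nat,
       R1 <= k [set s1] [set t2] -> R2 <= k [set s2] [set t2] ->
       R1 + R2 <= k [set s1; s2] [set t2] ->
       achievable tl hd s1 s2 t1 t2 R1 R2).
Proof.
move=> k hk; split=> _ R1 R2 hR1 hR2 hR12.
  have [p hp pr] := prime_above #|{: {set E} * {set 'I_(R1 + R2)}}|.
  exists ('F_p).
  apply: (achieve_F hacyc hs12 hsrc hst); first by rewrite card_Fp.
  - exact: leq_trans hk (geq_minr _ _).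
  - exact: hR1.
  - exact: hR2.
  - exact: hR12.
have [p hp pr] := prime_above #|{: {set E} * {set 'I_(R2 + R1)}}|.
exists ('F_p).
have hsrc' : forall e : E, hd e != s2 /\ hd e != s1 by move=> e; case: (hsrc e).
have hst' : [&& s2 != t2, s2 != t1, s1 != t2 & s1 != t1].
  by case/and4P: hst => -> -> -> ->.
have e12 : [set s2; s1] = [set s1; s2] by rewrite setUC.
have hs21 : s2 != s1 by rewrite eq_sym.
have hc : #|{: {set E} * {set 'I_(R2 + R1)}}| < #|'F_p| by rewrite card_Fp.
have H := achieve_F (F := 'F_p) (t1 := t2) (t2 := t1) (R1 := R2) (R2 := R1) hacyc hs21 hsrc' hst' hc.
cbv zeta in H.
have [] := H.
- by rewrite e12 addnC; apply: leq_trans hk (geq_minl _ _).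
- exact: hR2.
- exact: hR1.
- by rewrite e12 addnC.
move=> a1 [a2 [b [d1 d2]]]; exists a2, a1, b; split.
  move=> x1 x2 x1' x2' y y' hy hy' hyy; apply: (d2 x2 x1 x2' x1' y y') => //;
  by apply/induced_swap.
move=> x1 x2 x1' x2' y y' hy hy' hyy; apply: (d1 x2 x1 x2' x1' y y') => //;
by apply/induced_swap.
Qed.
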